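(* Let $G$ be a directed $st$-graph and $G'$ a subgraph of $G$ with the same source and sink such that $\mathrm{Path}_A(G')=\mathrm{Path}_A(G)$. Then $G$ is vulnerable if and only if $G'$ is vulnerable.
   Context: A directed $st$-graph $G=(V,E,s,t)$ is a finite directed graph with no self-loops and no parallel edges, with distinct source $s$ (no incoming edges) and sink $t$ (no outgoing edges), such that every vertex lies on some directed walk from $s$ to $t$. $\mathrm{Path}_A(G)$ is the set of acyclic directed $s$–$t$ paths in $G$; $P(G)$ is the set of all directed $s$–$t$ walks. A flow is a finitely supported $\varphi:P(G)\to\mathbb{R}_{\ge0}$, inducing $\varphi(e)=\sum_p(\text{occurrences of }e\text{ in }p)\varphi(p)$. A latency function assigns each edge a continuous non-decreasing $l_e:\mathbb{R}_{\ge0}\to\mathbb{R}_{\ge0}$, and $l_p(\varphi)=\sum_{e\in p}l_e(\varphi(e))$. A flow is feasible for $(G,r,l)$ if its total value is $r$, and a Wardrop flow if for all $p,q$ with $\varphi(p)>0$, $l_p(\varphi)\le l_q(\varphi)$; $L(G,r,l)$ is the common latency of used paths at any Wardrop flow ($0$ if $r=0$). $G$ is vulnerable if there exist $r\ge0$, a latency function $l$ and a subgraph $H$ of $G$ (same source and sink) with $L(G,r,l)>L(H,r,l|_H)$. *)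

(* Defs.v *)
From Stdlib Require Import Reals List Arith ClassicalEpsilon.
Import ListNotations.
Open Scope R_scope.

Definition edge := (nat * nat)%type.

Definition edge_eq_dec : forall x y : edge, {x = y} + {x <> y}.
Proof. decide equality; apply Nat.eq_dec. Defined.

(** A (candidate) graph with distinguished source and sink; its vertex set is
    {src, snk} together with all endpoints of edges. *)
Record graph := mkGraph { E : list edge; src : nat; snk : nat }.

Definition is_vertex (G : graph) (v : nat) : Prop :=
  v = src G \/ v = snk G \/ exists e, In e (E G) /\ (fst e = v \/ snd e = v).

(** Edges traversed by a walk given as its vertex sequence (no parallel edges,
    so the vertex sequence determines the walk); multiplicities are kept. *)
Fixpoint wedges (p : list nat) : list edge :=
  match p with
  | u :: ((v :: _) as q) => (u, v) :: wedges q
  | _ => []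
  end.

Definition is_walk (G : graph) (p : list nat) : Prop :=
  p <> [] /\ hd_error p = Some (src G) /\ last p 0%nat = snk G /\
  (forall e, In e (wedges p) -> In e (E G)).

Definition acyclic_path (G : graph) (p : list nat) : Prop :=
  is_walk G p /\ NoDup p.

Definition is_stgraph (G : graph) : Prop :=
  src G <> snk G /\
  NoDup (E G) /\
  (forall e, In e (E G) -> fst e <> snd e) /\
  (forall e, In e (E G) -> snd e <> src G) /\
  (forall e, In e (E G) -> fst e <> snk G) /\
  (forall v, is_vertex G v -> exists p, is_walk G p /\ In v p).

Definition subgraph (H G : graph) : Prop :=
  is_stgraph H /\ src H = src G /\ snk H = snk G /\
  (forall e, In e (E H) -> In e (E G)).

(** A finitely supported flow, represented as a finite list of
    (walk, weight) entries; phi(p) is the total weight of entries for p. *)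
Definition flow := list (list nat * R).

Definition is_flow (G : graph) (phi : flow) : Prop :=
  forall pw, In pw phi -> is_walk G (fst pw) /\ 0 <= snd pw.

Definition flow_val (phi : flow) : R :=
  fold_right (fun pw acc => snd pw + acc) 0 phi.

Definition flow_path (phi : flow) (p : list nat) : R :=
  fold_right (fun pw acc =>
    (if list_eq_dec Nat.eq_dec (fst pw) p then snd pw else 0) + acc) 0 phi.

Definition flow_edge (phi : flow) (e : edge) : R :=
  fold_right (fun pw acc =>
    INR (count_occ edge_eq_dec (wedges (fst pw)) e) * snd pw + acc) 0 phi.

Definition latency := edge -> R -> R.

Definition is_latency (G : graph) (l : latency) : Prop :=
  forall e, In e (E G) ->
    (forall x, 0 <= x -> 0 <= l e x) /\
    (forall x y, 0 <= x -> x <= y -> l e x <= l e y) /\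
    (forall x, 0 <= x -> limit1_in (l e) (fun y => 0 <= y) (l e x) x).

Definition path_lat (l : latency) (phi : flow) (p : list nat) : R :=
  fold_right (fun e acc => l e (flow_edge phi e) + acc) 0 (wedges p).

Definition feasible (G : graph) (r : R) (phi : flow) : Prop :=
  is_flow G phi /\ flow_val phi = r.

Definition wardrop (G : graph) (l : latency) (phi : flow) : Prop :=
  forall p q, 0 < flow_path phi p -> is_walk G q ->
    path_lat l phi p <= path_lat l phi q.

(** L(G, r, l): the common latency of used paths at a Wardrop flow
    (0 if r = 0), selected by Hilbert's epsilon. *)
Definition Lwar (G : graph) (r : R) (l : latency) : R :=
  epsilon (inhabits 0) (fun x =>
    (r = 0 /\ x = 0) \/
    (0 < r /\ exists phi, feasible G r phi /\ wardrop G l phi /\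
        exists p, 0 < flow_path phi p /\ path_lat l phi p = x)).

Definition vulnerable (G : graph) : Prop :=
  exists (r : R) (l : latency) (H : graph),
    0 <= r /\ is_latency G l /\ subgraph H G /\ Lwar G r l > Lwar H r l.

(* Main.v *)
Require Import Defs.
From Stdlib Require Import Reals List Arith ClassicalEpsilon Permutation Lia Lra FunctionalExtensionality PropExtensionality.
Import ListNotations.
Open Scope R_scope.

Lemma wedges_split (a X : list nat) (v : nat) :
  wedges (a ++ v :: X) = wedges (a ++ [v]) ++ wedges (v :: X).
Proof.
  induction a as [|x a IH]; [reflexivity|].
  simpl. destruct a as [|y a]; simpl; [reflexivity|].
  simpl in IH. rewrite IH. reflexivity.
Qed.

Lemma last_cons_app (a : list nat) v X d :
  last (a ++ v :: X) d = last (v :: X) d.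
Proof.
  induction a as [|x a IH]; [reflexivity|].
  simpl. rewrite IH. destruct a; simpl; reflexivity.
Qed.

Lemma hd_cons_app (a : list nat) v X Y :
  hd_error (a ++ v :: X) = hd_error (a ++ v :: Y).
Proof. destruct a; reflexivity. Qed.

Lemma shortcut (p : list nat) :
  exists p', NoDup p' /\ hd_error p' = hd_error p /\ last p' 0%nat = last p 0%nat /\
    (p <> [] -> p' <> []) /\ exists rest, Permutation (wedges p) (wedges p' ++ rest).
Proof.
  remember (length p) as n eqn:Hn. revert p Hn.
  induction n as [n IH] using (well_founded_induction lt_wf).
  intros p Hn.
  destruct (ListDec.NoDup_dec Nat.eq_dec p) as [Hd|Hd].
  - exists p. repeat split; auto. exists []. rewrite app_nil_r. apply Permutation_refl.
  - destruct (ListDec.not_NoDup (fun x y => match Nat.eq_dec x y with left h => or_introl h | right h => or_intror h end) Hd) as (v & a & b & c & Hp).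
    subst p.
    destruct (IH (length (a ++ v :: c))) with (p := a ++ v :: c) as
      (p' & H1 & H2 & H3 & H4 & rest & H5); [|reflexivity|].
    { subst n. rewrite !length_app. simpl. rewrite length_app. simpl. lia. }
    exists p'. split; [exact H1|]. split.
    { rewrite H2. apply hd_cons_app. }
    split.
    { rewrite H3, !last_cons_app.
      change (v :: b ++ v :: c) with ((v :: b) ++ v :: c). rewrite last_cons_app. reflexivity. }
    split.
    { intros _. apply H4. destruct a; discriminate. }
    exists (rest ++ wedges (v :: b ++ [v])).
    rewrite (wedges_split a (b ++ v :: c) v). rewrite (wedges_split a c v) in H5.
    change (v :: b ++ v :: c) with ((v :: b) ++ v :: c). rewrite (wedges_split (v :: b) c v).
    set (W1 := wedges (a ++ [v])) in *. set (W2 := wedges (v :: c)) in *.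
    set (M := wedges ((v :: b) ++ [v])).
    change (v :: b ++ [v]) with ((v :: b) ++ [v]). fold M.
    apply Permutation_trans with ((W1 ++ W2) ++ M).
    { rewrite <- app_assoc. apply Permutation_app_head. apply Permutation_app_comm. }
    rewrite app_assoc. apply Permutation_app_tail. exact H5.
Qed.

Definition lat_sum (l : latency) (phi : flow) (L : list edge) : R :=
  fold_right (fun e acc => l e (flow_edge phi e) + acc) 0 L.

Lemma path_lat_sum l phi p : path_lat l phi p = lat_sum l phi (wedges p).
Proof. reflexivity. Qed.

Lemma lat_sum_app l phi A B : lat_sum l phi (A ++ B) = lat_sum l phi A + lat_sum l phi B.
Proof. induction A; simpl; [ring|]. rewrite IHA; ring. Qed.

Lemma lat_sum_perm l phi A B : Permutation A B -> lat_sum l phi A = lat_sum l phi B.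
Proof. induction 1; simpl; try lra. Qed.

Lemma lat_sum_nonneg l phi A : (forall e, In e A -> 0 <= l e (flow_edge phi e)) ->
  0 <= lat_sum l phi A.
Proof.
  induction A; simpl; intros H; [lra|].
  assert (0 <= l a (flow_edge phi a)) by auto.
  assert (0 <= lat_sum l phi A) by auto. lra.
Qed.

Lemma lat_sum_zero l phi A : (forall e, In e A -> 0 <= l e (flow_edge phi e)) ->
  lat_sum l phi A <= 0 -> forall e, In e A -> l e (flow_edge phi e) = 0.
Proof.
  induction A; simpl; intros H Hs e Hin; [contradiction|].
  assert (0 <= l a (flow_edge phi a)) by auto.
  assert (0 <= lat_sum l phi A) by (apply lat_sum_nonneg; auto).
  destruct Hin as [<-|Hin]; [lra|].
  apply IHA; auto. lra.
Qed.

Lemma lat_sum_ext l phi psi A :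
  (forall e, In e A -> l e (flow_edge phi e) = l e (flow_edge psi e)) ->
  lat_sum l phi A = lat_sum l psi A.
Proof.
  induction A; simpl; intros H; [lra|]. rewrite H by auto. rewrite IHA; auto.
Qed.

Lemma lat_sum_ext_l l l' phi A :
  (forall e, In e A -> l e = l' e) ->
  lat_sum l phi A = lat_sum l' phi A.
Proof.
  induction A; simpl; intros H; [lra|]. rewrite H by auto. rewrite IHA; auto.
Qed.

Definition nonnegw (phi : flow) := forall pw, In pw phi -> 0 <= snd pw.

Lemma flow_edge_nonneg phi e : nonnegw phi -> 0 <= flow_edge phi e.
Proof.
  induction phi as [|pw phi IH]; simpl; intros H; [lra|].
  assert (0 <= snd pw) by (apply H; left; auto).
  assert (0 <= flow_edge phi e) by (apply IH; intros y Hy; apply H; right; auto).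
  pose proof (pos_INR (count_occ edge_eq_dec (wedges (fst pw)) e)).
  assert (0 <= INR (count_occ edge_eq_dec (wedges (fst pw)) e) * snd pw) by (apply Rmult_le_pos; auto).
  lra.
Qed.

Lemma flow_path_ge phi pw : nonnegw phi -> In pw phi -> snd pw <= flow_path phi (fst pw).
Proof.
  induction phi as [|x phi IH]; simpl; intros H Hin; [contradiction|].
  assert (Hx : 0 <= snd x) by (apply H; left; auto).
  assert (Hn : nonnegw phi) by (intros y Hy; apply H; right; auto).
  assert (0 <= flow_path phi (fst pw)).
  { clear -Hn. induction phi as [|y phi IH]; simpl; [lra|].
    assert (0 <= snd y) by (apply Hn; left; auto).
    assert (0 <= flow_path phi (fst pw)) by (apply IH; intros z Hz; apply Hn; right; auto).
    destruct list_eq_dec; lra. }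
  destruct Hin as [<-|Hin].
  - destruct list_eq_dec; [lra|congruence].
  - specialize (IH Hn Hin). destruct list_eq_dec; lra.
Qed.

Lemma flow_path_pos phi q : 0 < flow_path phi q -> exists pw, In pw phi /\ fst pw = q /\ 0 < snd pw.
Proof.
  induction phi as [|x phi IH]; simpl; intros H; [lra|].
  destruct list_eq_dec as [e|e].
  - destruct (Rlt_dec 0 (snd x)).
    + exists x; auto.
    + destruct IH as (pw & ?&?&?); [lra|]. exists pw; auto.
  - destruct IH as (pw & ?&?&?); [lra|]. exists pw; auto.
Qed.

Definition mapf (f : list nat -> list nat) (phi : flow) : flow :=
  map (fun pw => (f (fst pw), snd pw)) phi.

Lemma mapf_val f phi : flow_val (mapf f phi) = flow_val phi.
Proof. induction phi; simpl; [auto|]. rewrite IHphi. auto. Qed.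

Lemma mapf_nonneg f phi : nonnegw phi -> nonnegw (mapf f phi).
Proof.
  intros H pw Hin. unfold mapf in Hin. apply in_map_iff in Hin.
  destruct Hin as (x & <- & Hx). simpl. auto.
Qed.

Lemma mapf_path f phi p : nonnegw phi -> flow_path phi p <= flow_path (mapf f phi) (f p).
Proof.
  induction phi as [|x phi IH]; simpl; intros H; [lra|].
  assert (0 <= snd x) by (apply H; left; auto).
  assert (flow_path phi p <= flow_path (mapf f phi) (f p)) by (apply IH; intros y Hy; apply H; right; auto).
  destruct (list_eq_dec Nat.eq_dec (fst x) p) as [e|e];
  destruct (list_eq_dec Nat.eq_dec (f (fst x)) (f p)) as [e'|e']; try lra.
  rewrite e in e'. congruence.
Qed.

Lemma mapf_edge_le f phi e : nonnegw phi ->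
  (forall pw, In pw phi -> (count_occ edge_eq_dec (wedges (f (fst pw))) e <= count_occ edge_eq_dec (wedges (fst pw)) e)%nat) ->
  flow_edge (mapf f phi) e <= flow_edge phi e.
Proof.
  induction phi as [|x phi IH]; simpl; intros H Hc; [lra|].
  assert (0 <= snd x) by (apply H; left; auto).
  assert (flow_edge (mapf f phi) e <= flow_edge phi e) by
    (apply IH; [intros y Hy; apply H; right; auto | intros y Hy; apply Hc; right; auto]).
  assert (INR (count_occ edge_eq_dec (wedges (f (fst x))) e) <= INR (count_occ edge_eq_dec (wedges (fst x)) e))
    by (apply le_INR; apply Hc; left; auto).
  assert (INR (count_occ edge_eq_dec (wedges (f (fst x))) e) * snd x <= INR (count_occ edge_eq_dec (wedges (fst x)) e) * snd x) by (apply Rmult_le_compat_r; auto).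
  lra.
Qed.

Lemma mapf_edge_eq f phi e :
  (forall pw, In pw phi -> 0 < snd pw -> count_occ edge_eq_dec (wedges (f (fst pw))) e = count_occ edge_eq_dec (wedges (fst pw)) e) ->
  nonnegw phi ->
  flow_edge (mapf f phi) e = flow_edge phi e.
Proof.
  induction phi as [|x phi IH]; simpl; intros Hc H; [lra|].
  rewrite IH; [| intros y Hy Hp; apply Hc; auto | intros y Hy; apply H; right; auto].
  assert (0 <= snd x) by (apply H; left; auto).
  destruct (Rlt_dec 0 (snd x)).
  - rewrite Hc by auto. auto.
  - replace (snd x) with 0 by lra. ring.
Qed.

Definition LatOK (G : graph) (l : latency) :=
  forall e, In e (E G) -> (forall x, 0 <= x -> 0 <= l e x) /\ (forall x y, 0 <= x -> x <= y -> l e x <= l e y).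

Lemma walk_incl (G G' : graph) p :
  src G' = src G -> snk G' = snk G -> (forall e, In e (E G') -> In e (E G)) ->
  is_walk G' p -> is_walk G p.
Proof.
  intros Hs Ht Hi (H1 & H2 & H3 & H4). repeat split; auto; congruence.
Qed.

Lemma walk_lat_nonneg G l phi q : LatOK G l -> nonnegw phi -> is_walk G q ->
  forall e, In e (wedges q) -> 0 <= l e (flow_edge phi e).
Proof.
  intros HL Hn (_&_&_&Hq) e He. apply (proj1 (HL e (Hq e He))). apply flow_edge_nonneg; auto.
Qed.

Lemma count_split (A B C : list edge) e : Permutation A (B ++ C) ->
  count_occ edge_eq_dec A e = (count_occ edge_eq_dec B e + count_occ edge_eq_dec C e)%nat.
Proof.
  intros H. rewrite (proj1 (Permutation_count_occ edge_eq_dec _ _) H e). apply count_occ_app.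
Qed.

Lemma Lwar_ext G H r l l' : (forall x,
   ((r = 0 /\ x = 0) \/
    (0 < r /\ exists phi, feasible G r phi /\ wardrop G l phi /\
        exists p, 0 < flow_path phi p /\ path_lat l phi p = x)) <->
   ((r = 0 /\ x = 0) \/
    (0 < r /\ exists phi, feasible H r phi /\ wardrop H l' phi /\
        exists p, 0 < flow_path phi p /\ path_lat l' phi p = x))) ->
  Lwar G r l = Lwar H r l'.
Proof.
  intros Hx. unfold Lwar. f_equal. apply functional_extensionality. intros x.
  apply propositional_extensionality. apply Hx.
Qed.

Lemma Lwar_sub (G G' : graph) r l :
  src G' = src G -> snk G' = snk G -> (forall e, In e (E G') -> In e (E G)) ->
  (forall p, is_walk G p -> exists p', is_walk G' p' /\ exists rest, Permutation (wedges p) (wedges p' ++ rest)) ->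
  LatOK G l ->
  Lwar G r l = Lwar G' r l.
Proof.
  intros Hs Ht Hi Hsh HL. apply Lwar_ext. intros x. split.
  - intros [H0|[Hr (phi & [Hf Hv] & Hw & p & Hp & Hx)]]; [left; exact H0|right; split; [exact Hr|]].
    assert (Hn : nonnegw phi) by (intros pw Hpw; apply (Hf pw Hpw)).
    set (sc := fun p : list nat => epsilon (inhabits p) (fun p' => is_walk G' p' /\ exists rest, Permutation (wedges p) (wedges p' ++ rest))).
    assert (Hsc : forall p, is_walk G p -> is_walk G' (sc p) /\ exists rest, Permutation (wedges p) (wedges (sc p) ++ rest)).
    { intros q Hq. unfold sc. apply epsilon_spec. apply Hsh; auto. }
    assert (Hused : forall pw, In pw phi -> 0 < snd pw ->
       path_lat l phi (fst pw) = path_lat l phi (sc (fst pw)) /\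
       forall e, (count_occ edge_eq_dec (wedges (sc (fst pw))) e < count_occ edge_eq_dec (wedges (fst pw)) e)%nat ->
         l e (flow_edge phi e) = 0).
    { intros pw Hpw Hpos.
      assert (Hwk : is_walk G (fst pw)) by apply (Hf pw Hpw).
      destruct (Hsc _ Hwk) as [Hw' [rest Hperm]].
      assert (Hle : path_lat l phi (fst pw) <= path_lat l phi (sc (fst pw))).
      { apply Hw. pose proof (flow_path_ge phi pw Hn Hpw). lra. eapply walk_incl; eauto. }
      assert (Heq : path_lat l phi (fst pw) = path_lat l phi (sc (fst pw)) + lat_sum l phi rest).
      { rewrite !path_lat_sum, <- lat_sum_app. apply lat_sum_perm; auto. }
      assert (Hrn : forall e, In e rest -> 0 <= l e (flow_edge phi e)).
      { intros e He. apply (walk_lat_nonneg G l phi (fst pw)); auto.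
        apply Permutation_in with (wedges (sc (fst pw)) ++ rest). symmetry; auto. apply in_or_app; auto. }
      pose proof (lat_sum_nonneg l phi rest Hrn).
      split; [lra|].
      intros e Hc. apply (lat_sum_zero l phi rest Hrn); [lra|].
      rewrite (count_split _ _ _ e Hperm) in Hc. apply (count_occ_In edge_eq_dec). lia. }
    assert (Hcle : forall e pw, In pw phi -> (count_occ edge_eq_dec (wedges (sc (fst pw))) e <= count_occ edge_eq_dec (wedges (fst pw)) e)%nat).
    { intros e pw Hpw. destruct (Hsc (fst pw) (proj1 (Hf pw Hpw))) as [_ [rest Hperm]].
      rewrite (count_split _ _ _ e Hperm). lia. }
    set (psi := mapf sc phi).
    assert (Hnp : nonnegw psi) by (apply mapf_nonneg; auto).
    assert (Hlat : forall e, In e (E G) -> l e (flow_edge psi e) = l e (flow_edge phi e)).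
    { intros e He. destruct (HL e He) as [Hl0 Hmono].
      destruct (Req_dec (l e (flow_edge phi e)) 0) as [Z|NZ].
      - rewrite Z. apply Rle_antisym.
        + rewrite <- Z. apply Hmono. apply flow_edge_nonneg; auto.
          apply mapf_edge_le; auto.
        + apply Hl0. apply flow_edge_nonneg; auto.
      - f_equal. apply mapf_edge_eq; auto. intros pw Hpw Hpos.
        pose proof (Hcle e pw Hpw).
        destruct (Nat.eq_dec (count_occ edge_eq_dec (wedges (sc (fst pw))) e) (count_occ edge_eq_dec (wedges (fst pw)) e)) as [E1|E1]; auto.
        exfalso. apply NZ. apply (proj2 (Hused pw Hpw Hpos)). lia. }
    assert (Hpl : forall q, is_walk G q -> path_lat l psi q = path_lat l phi q).
    { intros q (_&_&_&Hq). rewrite !path_lat_sum. apply lat_sum_ext. intros e He. apply Hlat; auto. }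
    exists psi. split; [split|split].
    + intros pw Hpw. unfold psi, mapf in Hpw. apply in_map_iff in Hpw.
      destruct Hpw as (y & <- & Hy). simpl. split; [apply Hsc; apply (Hf y Hy)| apply Hn; auto].
    + unfold psi. rewrite mapf_val. auto.
    + intros p1 q Hp1 Hq.
      destruct (flow_path_pos _ _ Hp1) as (pw & Hpw & Hfst & Hpos).
      unfold psi, mapf in Hpw. apply in_map_iff in Hpw. destruct Hpw as (y & Hyeq & Hy).
      subst pw. simpl in Hfst, Hpos. subst p1.
      assert (Hwy : is_walk G (fst y)) by apply (Hf y Hy).
      rewrite !Hpl by (auto; eapply walk_incl; eauto; apply Hsc; auto).
      rewrite <- (proj1 (Hused y Hy Hpos)).
      apply Hw. pose proof (flow_path_ge phi y Hn Hy). lra. eapply walk_incl; eauto.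
    + exists (sc p). destruct (flow_path_pos _ _ Hp) as (pw & Hpw & Hfst & Hpos).
      subst p. split.
      * pose proof (mapf_path sc phi (fst pw) Hn). unfold psi. lra.
      * assert (Hwy : is_walk G (fst pw)) by apply (Hf pw Hpw).
        rewrite Hpl by (eapply walk_incl; eauto; apply Hsc; auto).
        rewrite <- (proj1 (Hused pw Hpw Hpos)). auto.
  - intros [H0|[Hr (phi & [Hf Hv] & Hw & p & Hp & Hx)]]; [left; exact H0|right; split; [exact Hr|]].
    assert (Hn : nonnegw phi) by (intros pw Hpw; apply (Hf pw Hpw)).
    exists phi. split; [split|split].
    + intros pw Hpw. destruct (Hf pw Hpw). split; auto. eapply walk_incl; eauto.
    + auto.
    + intros p1 q Hp1 Hq. destruct (Hsh q Hq) as (q' & Hq' & rest & Hperm).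
      assert (H1 : path_lat l phi p1 <= path_lat l phi q') by (apply Hw; auto).
      assert (Heq : path_lat l phi q = path_lat l phi q' + lat_sum l phi rest).
      { rewrite !path_lat_sum, <- lat_sum_app. apply lat_sum_perm; auto. }
      assert (Hrn : forall e, In e rest -> 0 <= l e (flow_edge phi e)).
      { intros e He. apply (walk_lat_nonneg G l phi q); auto.
        apply Permutation_in with (wedges q' ++ rest). symmetry; auto. apply in_or_app; auto. }
      pose proof (lat_sum_nonneg l phi rest Hrn). lra.
    + exists p. auto.
Qed.

Lemma last_in (p : list nat) d : p <> [] -> In (last p d) p.
Proof.
  induction p as [|x p IH]; intros H; [congruence|].
  destruct p as [|y p]; simpl; [auto|]. right. apply IH. discriminate.
Qed.

Lemma hd_in (p : list nat) x : hd_error p = Some x -> In x p.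
Proof. destruct p; simpl; intros H; inversion H; auto. Qed.

Lemma wedges_in p u v : In (u, v) (wedges p) -> In u p /\ In v p.
Proof.
  induction p as [|x p IH]; simpl; [contradiction|].
  destruct p as [|y p]; [contradiction|]. intros [H|H].
  - inversion H; subst. simpl; auto.
  - destruct (IH H). split; right; auto.
Qed.

Lemma short_walk G p : is_walk G p ->
  exists p', acyclic_path G p' /\ exists rest, Permutation (wedges p) (wedges p' ++ rest).
Proof.
  intros (H1&H2&H3&H4). destruct (shortcut p) as (p' & D & Hh & Hl & Hne & rest & Hperm).
  exists p'. split; [|exists rest; auto].
  split; [|auto]. repeat split; auto.
  - congruence.
  - congruence.
  - intros e He. apply H4. apply Permutation_in with (wedges p' ++ rest). symmetry; auto.
    apply in_or_app; auto.
Qed.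

Lemma Lwar_l_ext G r l l' : (forall e, In e (E G) -> l e = l' e) -> Lwar G r l = Lwar G r l'.
Proof.
  intros Hl. apply Lwar_ext. intros x.
  assert (Hp : forall phi q, is_walk G q -> path_lat l phi q = path_lat l' phi q).
  { intros phi q (_&_&_&Hq). rewrite !path_lat_sum. apply lat_sum_ext_l. intros e He; apply Hl; auto. }
  assert (Hw : forall phi, is_flow G phi -> wardrop G l phi <-> wardrop G l' phi).
  { intros phi Hf. split; intros W p q Hpq Hq;
    destruct (flow_path_pos _ _ Hpq) as (pw & Hpw & <- & _);
    pose proof (proj1 (Hf pw Hpw));
    specialize (W _ q Hpq Hq); rewrite ?Hp in * by auto; rewrite <- ?Hp in * by auto; auto. }
  split; intros [H0|[Hr (phi & [Hf Hv] & W & p & Hpp & Hx)]]; auto; right; split; auto;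
    exists phi; (split; [split; auto|split; [apply Hw; auto|exists p; split; auto]]);
    destruct (flow_path_pos _ _ Hpp) as (pw & Hpw & <- & _);
    pose proof (proj1 (Hf pw Hpw)); rewrite <- Hx; [symmetry|]; apply Hp; auto.
Qed.

Lemma latok_of G l : is_latency G l -> LatOK G l.
Proof. intros H e He. destruct (H e He) as (A&B&_). auto. Qed.

Lemma latok_sub G H l : LatOK G l -> (forall e, In e (E H) -> In e (E G)) -> LatOK H l.
Proof. intros L Hi e He. apply L; auto. Qed.

Theorem lemma5 (G G' : graph) :
  is_stgraph G -> subgraph G' G ->
  (forall p, acyclic_path G' p <-> acyclic_path G p) ->
  (vulnerable G <-> vulnerable G').
Proof.
  intros HG (HG' & Hs' & Ht' & Hi') Hac.
  assert (HLG : forall r l, LatOK G l -> Lwar G r l = Lwar G' r l).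
  { intros r l L. apply Lwar_sub; auto. intros p Hp.
    destruct (short_walk G p Hp) as (p' & Ha & rest & Hperm).
    exists p'. split; [apply Hac; auto|exists rest; auto]. }
  split.
  - intros (r & l & H & Hr & Hl & (HH & HsH & HtH & HiH) & Hgt).
    set (onpath := fun e => exists p, acyclic_path H p /\ In e (wedges p)).
    set (H' := mkGraph (filter (fun e => if excluded_middle_informative (onpath e) then true else false) (E H)) (src H) (snk H)).
    assert (HE : forall e, In e (E H') <-> In e (E H) /\ onpath e).
    { intros e. simpl. rewrite filter_In. destruct excluded_middle_informative; intuition discriminate. }
    assert (Hwk : forall p, acyclic_path H p -> is_walk H' p).
    { intros p Hp. pose proof Hp as [(A&B&C&D) Hd].
      split; [auto|split; [exact B|split; [exact C|]]].
      intros e He. apply HE. split; [auto|]. exists p; split; auto. }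
    assert (Hsrc : exists p, acyclic_path H p).
    { destruct HH as (_&_&_&_&_&V). destruct (V (src H)) as (p & Hp & _). left; auto.
      destruct (short_walk H p Hp) as (p' & ? & _). eauto. }
    assert (HsubH' : subgraph H' G').
    { destruct HH as (N1&N2&N3&N4&N5&V).
      split; [|split; [simpl; congruence|split; [simpl; congruence|]]].
      - split; [simpl; auto|split; [apply NoDup_filter; auto|]].
        split; [intros e He; apply N3; apply HE; auto|].
        split; [intros e He; apply N4; apply HE; auto|].
        split; [intros e He; apply N5; apply HE; auto|].
        intros v [Hv|[Hv|(e & He & Hv)]].
        + destruct Hsrc as (p & Hp). exists p. split; [apply Hwk; auto|].
          destruct Hp as [(A&B&C&D) _]. subst v. apply hd_in. simpl. auto.
        + destruct Hsrc as (p & Hp). exists p. split; [apply Hwk; auto|].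
          destruct Hp as [(A&B&C&D) _]. subst v. simpl. rewrite <- C. apply last_in; auto.
        + apply HE in He. destruct He as [_ (p & Hp & Hin)]. exists p. split; [apply Hwk; auto|].
          destruct e as [u w]. apply wedges_in in Hin. simpl in Hv. destruct Hv; subst; tauto.
      - intros e He. apply HE in He. destruct He as [_ (p & Hp & Hin)].
        assert (Hg : acyclic_path G p).
        { destruct Hp as [Hw Hd]. split; auto. eapply walk_incl; eauto. }
        apply Hac in Hg. destruct Hg as [(_&_&_&D) _]. auto. }
    assert (LG : LatOK G l) by (apply latok_of; auto).
    assert (HLH : Lwar H r l = Lwar H' r l).
    { apply Lwar_sub; auto.
      - intros e He. apply HE; auto.
      - intros p Hp. destruct (short_walk H p Hp) as (p' & Ha & rest & Hperm).
        exists p'. split; [apply Hwk; auto|exists rest; auto].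
      - apply latok_sub with G; auto. }
    exists r, l, H'. split; auto. split.
    + intros e He. apply Hl. auto.
    + split; auto. rewrite <- HLG, <- HLH; auto.
  - intros (r & l & H & Hr & Hl & (HH & HsH & HtH & HiH) & Hgt).
    set (l' := fun e => if in_dec edge_eq_dec e (E G') then l e else fun _ : R => 0).
    assert (Hl' : is_latency G l').
    { intros e He. unfold l'. destruct in_dec as [Hin|Hin].
      - apply Hl; auto.
      - split; [intros; lra|split; [intros; lra|]]. intros x _. exact (limit_free (fun _ => 0) _ x x).
    }
    assert (Ee : forall e, In e (E G') -> l' e = l e).
    { intros e He. unfold l'. destruct in_dec; tauto. }
    exists r, l', H. split; auto. split; auto. split.
    + split; auto. split; [congruence|split; [congruence|]]. auto.
    + rewrite HLG by (apply latok_of; auto).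
      rewrite (Lwar_l_ext G' r l' l) by auto.
      rewrite (Lwar_l_ext H r l' l) by auto. auto.
Qed.
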